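(* Let $q$ be a prime power, $k\ge 2$, and let $D\subseteq\mathbb{F}_q^k\setminus\{0\}$ be a set with $aD=D$ for all $a\in\mathbb{F}_q^*$ and $\#D=n$. Let $\widetilde{[D,D]}=\{(\mathbf{x},1):\mathbf{x}\in D\}\cup\{(\mathbf{x},0):\mathbf{x}\in D\}\subseteq\mathbb{F}_q^{k+1}$. For a linear form $H=\alpha_1x_1+\cdots+\alpha_kx_k+\alpha_{k+1}x_{k+1}$ on $\mathbb{F}_q^{k+1}$, let $\widetilde H=\alpha_1x_1+\cdots+\alpha_kx_k$, let $c_{\widetilde H}=(\widetilde H(\mathbf{x}))_{\mathbf{x}\in D}\in\mathrm{C}_D$, and let $c_H=(c_{H,0},c_{H,1})\in\mathrm{C}_{\widetilde{[D,D]}}$ where $c_{H,0}=(H(\mathbf{x},0))_{\mathbf{x}\in D}$ and $c_{H,1}=(H(\mathbf{x},1))_{\mathbf{x}\in D}$. Then: (i) if $\alpha_{k+1}=0$, then $\mathrm{w}(c_{H,1})=\mathrm{w}(c_{H,0})$ and $\mathrm{w}(c_H)=2\,\mathrm{w}(c_{\widetilde H})$; (ii) if $\alpha_{k+1}\ne 0$, then $\mathrm{w}(c_H)=n+\frac{q-2}{q-1}\mathrm{w}(c_{\widetilde H})$.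
   Context: For a finite ordered set $D=\{P_1,\ldots,P_n\}\subseteq\mathbb{F}_q^k$, $\mathrm{C}_D=\{(f(P_1),\ldots,f(P_n)):f \text{ linear form on }\mathbb{F}_q^k\}$. $\mathrm{w}$ denotes Hamming weight. *)

(* Defs.v *)
From HB Require Import structures.
From mathcomp Require Import all_boot all_order all_algebra all_field.
Set Implicit Arguments. Unset Strict Implicit. Unset Printing Implicit Defensive.
Import GRing.Theory.
Local Open Scope ring_scope.

Definition lform (F : finFieldType) (m : nat) (alpha : 'rV[F]_m) (v : 'rV[F]_m) : F :=
  \sum_(i < m) alpha 0 i * v 0 i.

(* Hamming weight of the codeword (f(P))_{P in S}: number of P in S with f P <> 0.
   (The weight does not depend on the chosen ordering of S.) *)
Definition wt (T : finType) (F : finFieldType) (S : {set T}) (f : T -> F) : nat :=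
  #|[set P in S | f P != 0]|.

Definition ext (F : finFieldType) (k : nat) (x : 'rV[F]_k) (t : F) : 'rV[F]_(k + 1) :=
  row_mx x (const_mx t).

Definition DDt (F : finFieldType) (k : nat) (D : {set 'rV[F]_k}) : {set 'rV[F]_(k + 1)} :=
  [set ext x 1 | x in D] :|: [set ext x 0 | x in D].

(* Main.v *)
Require Import Defs.
From HB Require Import structures.
From mathcomp Require Import all_boot all_order all_algebra all_field.
From mathcomp Require Import ring.
Import GRing.Theory Num.Theory.
Local Open Scope ring_scope.

Lemma lform_ext (F : finFieldType) (k : nat) (alpha : 'rV[F]_(k + 1)) x t :
  lform alpha (ext x t) = lform (lsubmx alpha) x + rsubmx alpha 0 0 * t.
Proof.
rewrite /lform /ext big_split_ord /= big_ord1; congr (_ + _).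
  by apply: eq_bigr => i _; rewrite row_mxEl !mxE.
by rewrite row_mxEr !mxE.
Qed.

Lemma lformZ (F : finFieldType) (k : nat) (b : 'rV[F]_k) c x :
  lform b (c *: x) = c * lform b x.
Proof.
rewrite /lform mulr_sumr; apply: eq_bigr => i _; by rewrite mxE mulrCA.
Qed.

Lemma card_sel_imset (T U : finType) (f : T -> U) (D : {set T}) (g : pred U) :
  injective f -> #|[set P in f @: D | g P]| = #|[set x in D | g (f x)]|.
Proof.
move=> finj; rewrite -(card_imset _ finj); apply: eq_card => P.
rewrite !inE; apply/andP/imsetP.
  by case=> /imsetP [x xD ->] gx; exists x => //; rewrite inE xD.
by case=> x; rewrite inE => /andP [xD gx] ->; split => //; apply: imset_f.
Qed.

Lemma ext_inj (F : finFieldType) (k : nat) (t : F) : injective (fun x : 'rV[F]_k => ext x t).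
Proof. by move=> x y; rewrite /ext => /eq_row_mx []. Qed.

Theorem proposition5p1 (F : finFieldType) (k : nat) (D : {set 'rV[F]_k})
    (alpha : 'rV[F]_(k + 1)) :
  (2 <= k)%N ->
  (0 : 'rV[F]_k) \notin D ->
  (forall a : F, a != 0 -> [set a *: x | x in D] = D) ->
  let n := #|D| in
  let H := lform alpha in
  let Ht := lform (lsubmx alpha) in
  let a_last := rsubmx alpha 0 0 in
  (a_last = 0 ->
     wt D (fun x => H (ext x 1)) = wt D (fun x => H (ext x 0)) /\
     wt (DDt D) H = (2 * wt D Ht)%N) /\
  (a_last != 0 ->
     (wt (DDt D) H)%:R = n%:R + ((#|F| - 2)%:R / (#|F| - 1)%:R) * (wt D Ht)%:R :> rat).
Proof.
move=> _ _ Dinv n H Ht a.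
have HE t : wt D (fun x => H (ext x t)) = #|[set x in D | Ht x + a * t != 0]|.
  by rewrite /wt; apply: eq_card => x; rewrite !inE /H lform_ext.
have Hsplit : wt (DDt D) H = addn (wt D (fun x => H (ext x 1))) (wt D (fun x => H (ext x 0))).
  rewrite /wt /DDt.
  have -> : [set P in [set ext x 1 | x in D] :|: [set ext x 0 | x in D] | H P != 0]
     = [set P in [set ext x 1 | x in D] | H P != 0] :|: [set P in [set ext x 0 | x in D] | H P != 0].
    by apply/setP => P; rewrite !inE andb_orl.
  rewrite cardsU !card_sel_imset; try exact: ext_inj.
  suff -> : [set P in [set ext x 1 | x in D] | H P != 0] :&: [set P in [set ext x 0 | x in D] | H P != 0] = set0
    by rewrite cards0 subn0.
  apply/setP => P; rewrite !inE; apply/negP => /andP [/andP [/imsetP [x _ ->] _]].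
  move=> /andP [/imsetP [y _]]; rewrite /ext => /eq_row_mx [_].
  by move/matrixP => /(_ 0 0); rewrite !mxE => /eqP; rewrite oner_eq0.
split.
  move=> a0.
  have E t : wt D (fun x => H (ext x t)) = wt D Ht.
    by rewrite HE; apply: eq_card => x; rewrite !inE a0 mul0r addr0.
  by rewrite Hsplit !E addnn -mul2n.
move=> an0.
pose N c := #|[set x in D | Ht x == c]|.
have NE c : c != 0 -> N c = N 1.
  move=> c0; rewrite /N -[RHS](card_imset _ (scalerI c0)); apply: eq_card => y.
  rewrite !inE; apply/andP/imsetP.
    case=> yD /eqP hy; exists (c^-1 *: y); last by rewrite scalerA divff // scale1r.
    rewrite !inE /Ht lformZ -/Ht hy mulVf // eqxx andbT.
    by rewrite -(Dinv c^-1 (invr_neq0 c0)); apply: imset_f.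
  case=> x; rewrite inE => /andP [xD /eqP hx] ->; split.
    by rewrite -(Dinv c c0); apply: imset_f.
  by rewrite /Ht lformZ -/Ht hx mulr1.
have W : wt D Ht = muln (#|F| - 1)%N (N 1).
  rewrite /wt -sum1_card (partition_big Ht (fun c => c != 0)) /=; last first.
    by move=> x; rewrite inE => /andP [].
  rewrite subn1 -(cardC1 0) -sum_nat_const; apply: eq_big => // c c0.
  rewrite -(NE c c0) /N -sum1_card; apply: eq_bigl => x; rewrite !inE.
  by case: (x \in D) => //=; case: (Ht x =P c) => [->|]; rewrite ?c0 ?andbF.
have W1 : wt D (fun x => H (ext x 1)) = subn n (N 1).
  rewrite HE mulr1.
  have -> : [set x in D | Ht x + a != 0] = D :\: [set x in D | Ht x == - a].
    by apply/setP => x; rewrite !inE addr_eq0; case: (x \in D); rewrite ?andbT ?andbF.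
  rewrite cardsD -(NE (- a)) ?oppr_eq0 //; congr (_ - _)%N.
  by apply: eq_card => x; rewrite !inE; case: (x \in D).
have W0 : wt D (fun x => H (ext x 0)) = wt D Ht.
  by rewrite HE mulr0; apply: eq_card => x; rewrite !inE addr0.
have Nle : leq (N 1) n by apply: subset_leq_card; apply/subsetP => x; rewrite inE => /andP [].
have q2 : (2 <= #|F|)%N by apply: card_finNzRing_gt1.
rewrite Hsplit W1 W0 W natrD natrB // !natrM natrB ?(leq_trans _ q2) //.
rewrite natrB //.
have q10 : (#|F|%:R - 1%:R : rat) != 0.
  by rewrite -natrB ?(leq_trans _ q2) // pnatr_eq0 subn_eq0 -ltnNge.
rewrite mulrA divfK //.
by move: (n%:R : rat) ((N 1)%:R : rat) (#|F|%:R : rat) => u v w; ring.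
Qed.
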